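(* Every simple probabilistic automaton is leaktight.
   Context: Fix a finite alphabet $A$. A probabilistic automaton is $\mathcal{A}=(Q,q_0,\Delta,F)$ with $Q$ finite, $\Delta:Q\times A\to\mathcal{D}(Q)$. For $a\in A$ let $M_a(s,t)=\Delta(s,a)(t)$, for $u=a_0\cdots a_{n-1}$ let $M_u=M_{a_0}\cdots M_{a_{n-1}}$ (identity for the empty word), and $\mathbb{P}_{\mathcal{A}}(s\xrightarrow{u}t)=M_u(s,t)$, $\mathbb{P}_{\mathcal{A}}(s\xrightarrow{u}T)=\sum_{t\in T}\mathbb{P}_{\mathcal{A}}(s\xrightarrow{u}t)$. For an infinite word $w\in A^\omega$, $w_{<k}$ denotes its prefix of length $k$. For $w\in A^\omega$ and $p\in Q$, the process induced by $w$ from $p$ is simple if there exist $\lambda>0$ and sequences $(A_k)_{k\in\mathbb{N}},(B_k)_{k\in\mathbb{N}}$ of subsets of $Q$ such that: for all $k$, $A_k\cap B_k=\emptyset$ and $A_k\cup B_k=Q$; for all $k$ and all $q\in A_k$, $\mathbb{P}_{\mathcal{A}}(p\xrightarrow{w_{<k}}q)\ge\lambda$; and $\lim_{n\to\infty}\mathbb{P}_{\mathcal{A}}(p\xrightarrow{w_{<n}}B_n)=0$. $\mathcal{A}$ is simple if for every $w\in A^\omega$ and every $p\in Q$ the process induced by $w$ from $p$ is simple. A nonnegative $Q\times Q$ matrix $M$ is idempotent if $M(s,t)>0\iff M^2(s,t)>0$ for all $s,t$; a finite word $u$ is idempotent if $M_u$ is. A leak is a sequence $(u_n)$ of idempotent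 words such that $M_{u_n}$ converges to an idempotent matrix $M$ and there exist states $r,q$, both recurrent in the Markov chain with transition matrix $M$, with $\lim_n\mathbb{P}_{\mathcal{A}}(r\xrightarrow{u_n}q)=0$ and $\mathbb{P}_{\mathcal{A}}(r\xrightarrow{u_n}q)>0$ for all $n$. $\mathcal{A}$ is leaktight if it has no leak. *)

(* Defs.v *)
From HB Require Import structures.
From mathcomp Require Import all_boot all_order all_algebra.
From mathcomp Require Import all_classical all_reals topology normedtype sequences.
Set Implicit Arguments. Unset Strict Implicit. Unset Printing Implicit Defensive.
Import Order.TTheory GRing.Theory Num.Theory.
Import numFieldNormedType.Exports.
Local Open Scope classical_set_scope.
Local Open Scope ring_scope.

Definition qmx (Q : finType) (R : realType) := Q -> Q -> R.

Definition qmx_mul (Q : finType) (R : realType) (M N : qmx Q R) : qmx Q R :=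
  fun s t => \sum_(r : Q) M s r * N r t.

Definition qmx_id (Q : finType) (R : realType) : qmx Q R :=
  fun s t => (s == t)%:R.

Record pa (A Q : finType) (R : realType) := PA {
  pa_q0 : Q;
  pa_Delta : Q -> A -> Q -> R;
  pa_F : {set Q};
  pa_Delta_ge0 : forall q a t, 0 <= pa_Delta q a t;
  pa_Delta_sum1 : forall q a, \sum_(t : Q) pa_Delta q a t = 1 }.

Section Auto.
Variables (A Q : finType) (R : realType) (aut : pa A Q R).

Definition Ma (a : A) : qmx Q R := fun s t => pa_Delta aut s a t.

Definition Mw (u : seq A) : qmx Q R :=
  foldr (fun a acc => qmx_mul (Ma a) acc) (@qmx_id Q R) u.

Definition Pr (s : Q) (u : seq A) (t : Q) : R := Mw u s t.
Definition PrSet (s : Q) (u : seq A) (T : {set Q}) : R := \sum_(t in T) Pr s u t.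

Definition prefix (w : nat -> A) (k : nat) : seq A := mkseq w k.

Definition simple_process (w : nat -> A) (p : Q) : Prop :=
  exists lambda : R, 0 < lambda /\
  exists (As Bs : nat -> {set Q}),
    (forall k, As k :&: Bs k = finset.set0 /\ As k :|: Bs k = [set: Q]%SET) /\
    (forall k q, q \in As k -> lambda <= Pr p (prefix w k) q) /\
    (fun n => PrSet p (prefix w n) (Bs n)) @ \oo --> (0 : R).

Definition simple_pa : Prop := forall (w : nat -> A) (p : Q), simple_process w p.

Definition idempotent_mx (M : qmx Q R) : Prop :=
  forall s t, (0 < M s t) = (0 < qmx_mul M M s t).
Definition idempotent_word (u : seq A) : Prop := idempotent_mx (Mw u).

Definition mx_edge (M : qmx Q R) : rel Q := fun s t => 0 < M s t.
Definition recurrent (M : qmx Q R) (r : Q) : Prop :=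
  forall t, connect (mx_edge M) r t -> connect (mx_edge M) t r.

Definition leak (u : nat -> seq A) : Prop :=
  (forall n, idempotent_word (u n)) /\
  exists M : qmx Q R,
    (forall s t, (fun n => Mw (u n) s t) @ \oo --> M s t) /\
    idempotent_mx M /\
    exists r q, recurrent M r /\ recurrent M q /\
      (fun n => Pr r (u n) q) @ \oo --> (0 : R) /\
      (forall n, 0 < Pr r (u n) q).

Definition leaktight : Prop := forall u : nat -> seq A, ~ leak u.

End Auto.

(* Main.v *)
Require Import Defs.
From HB Require Import structures.
From mathcomp Require Import all_boot all_order all_algebra.
From mathcomp Require Import all_classical all_reals topology normedtype sequences.
Set Implicit Arguments. Unset Strict Implicit. Unset Printing Implicit Defensive.
Import Order.TTheory GRing.Theory Num.Theory.
Import numFieldNormedType.Exports.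
Local Open Scope classical_set_scope.
Local Open Scope ring_scope.
From mathcomp Require Import ring lra.

Section Alg.
Variables (A Q : finType) (R : realType) (aut : pa A Q R).

Notation Mw := (Mw aut).
Notation Del := (pa_Delta aut).

Lemma Mw_nil s t : Mw [::] s t = (s == t)%:R.
Proof. by []. Qed.

Lemma Mw_cons a u s t : Mw (a :: u) s t = \sum_r Del s a r * Mw u r t.
Proof. by []. Qed.

Lemma sum_delta (F : Q -> R) s : \sum_r (s == r)%:R * F r = F s.
Proof.
rewrite (bigD1 s) //= eqxx mul1r big1 ?addr0 // => r /negbTE.
by rewrite eq_sym => ->; rewrite mul0r.
Qed.

Lemma sum_deltar (F : Q -> R) s : \sum_r F r * (r == s)%:R = F s.
Proof.
rewrite (bigD1 s) //= eqxx mulr1 big1 ?addr0 // => r /negbTE ->.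
by rewrite mulr0.
Qed.

Lemma Mw_ge0 u s t : 0 <= Mw u s t.
Proof.
elim: u s t => [|a u IH] s t; first by rewrite Mw_nil ler0n.
rewrite Mw_cons; apply: sumr_ge0 => r _; apply: mulr_ge0 => //.
exact: pa_Delta_ge0.
Qed.

Lemma Mw_sum1 u s : \sum_t Mw u s t = 1.
Proof.
elim: u s => [|a u IH] s.
  under eq_bigr do rewrite Mw_nil.
  by rewrite (bigD1 s) //= eqxx big1 ?addr0 // => t; rewrite eq_sym => /negbTE ->.
under eq_bigr do rewrite Mw_cons.
rewrite exchange_big /=.
under eq_bigr do rewrite -mulr_sumr IH mulr1.
exact: pa_Delta_sum1.
Qed.

Lemma Mw_le1 u s t : Mw u s t <= 1.
Proof.
rewrite -(Mw_sum1 u s) (bigD1 t) //= lerDl.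
by apply: sumr_ge0 => i _; apply: Mw_ge0.
Qed.

Lemma Mw_cat u v s t : Mw (u ++ v) s t = \sum_r Mw u s r * Mw v r t.
Proof.
elim: u s => [|a u IH] s.
  by rewrite cat0s; under eq_bigr do rewrite Mw_nil; rewrite sum_delta.
rewrite cat_cons Mw_cons.
under eq_bigr do rewrite IH mulr_sumr.
rewrite exchange_big /=; apply: eq_bigr => r _.
rewrite /qmx_mul /Ma mulr_suml; apply: eq_bigr => i _.
by rewrite mulrA.
Qed.

Lemma Mw_one a s t : Mw [:: a] s t = Del s a t.
Proof. by rewrite Mw_cons sum_deltar. Qed.

Definition vm (x : Q -> R) (u : seq A) t := \sum_s x s * Mw u s t.

Lemma vm_nil x t : vm x [::] t = x t.
Proof. by rewrite /vm sum_deltar. Qed.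

Lemma vm_cat x u v t : vm x (u ++ v) t = vm (vm x u) v t.
Proof.
rewrite /vm; under eq_bigr do rewrite Mw_cat mulr_sumr.
rewrite exchange_big /=; apply: eq_bigr => r _.
rewrite mulr_suml; apply: eq_bigr => i _; by rewrite mulrA.
Qed.

Lemma vm_ge0 x u t : (forall s, 0 <= x s) -> 0 <= vm x u t.
Proof. by move=> H; apply: sumr_ge0 => s _; apply: mulr_ge0 => //; apply: Mw_ge0. Qed.

Lemma vm_sum x u : \sum_t vm x u t = \sum_s x s.
Proof.
rewrite /vm exchange_big /=; apply: eq_bigr => s _.
by rewrite -mulr_sumr Mw_sum1 mulr1.
Qed.

Lemma vm_add x y u t : vm (fun s => x s + y s) u t = vm x u t + vm y u t.
Proof. by rewrite /vm -big_split /=; apply: eq_bigr => s _; rewrite mulrDl. Qed.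

End Alg.

Section Gen.
Variable (R : realType).

Lemma term_le_sum (I : finType) (P : pred I) (F : I -> R) j :
  (forall i, P i -> 0 <= F i) -> P j -> F j <= \sum_(i | P i) F i.
Proof.
move=> H Pj; rewrite (bigD1 j) //= lerDl.
by apply: sumr_ge0 => i /andP [Pi _]; apply: H.
Qed.

Lemma term_le_sumT (I : finType) (F : I -> R) j :
  (forall i, 0 <= F i) -> F j <= \sum_i F i.
Proof. by move=> H; apply: (term_le_sum (P := xpredT)) => // i _; apply: H. Qed.

Lemma sum_pos_ex (I : finType) (F : I -> R) :
  0 < \sum_i F i -> exists i, 0 < F i.
Proof.
move=> H; apply/not_existsP => Hn.
have : \sum_i F i <= 0 by apply: sumr_le0 => i _; rewrite leNgt; apply/negP/Hn.
by rewrite leNgt H.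
Qed.

Lemma sum_avg (I : finType) (F : I -> R) :
  (0 < #|I|)%N -> exists i, \sum_j F j <= #|I|%:R * F i.
Proof.
move=> /card_gt0P [i0 _]; apply/not_existsP => Hn.
have H : forall i, #|I|%:R * F i < \sum_j F j.
  by move=> i; rewrite ltNge; apply/negP/Hn.
have : \sum_(i : I) #|I|%:R * F i < \sum_(i : I) \sum_j F j.
  apply: ltr_sum => //; apply/hasP; exists i0 => //; exact: mem_index_enum.
have E1 : \sum_(i : I) #|I|%:R * F i = #|I|%:R * \sum_j F j by rewrite mulr_sumr.
have E2 : \sum_(i : I) \sum_j F j = #|I|%:R * \sum_j F j.
  by rewrite sumr_const mulr_natl.
by rewrite E1 E2 ltxx.
Qed.

Lemma fin_min (I : finType) (P : pred I) (f : I -> R) :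
  (forall i, P i -> 0 < f i) -> exists c, 0 < c /\ forall i, P i -> c <= f i.
Proof.
move=> H.
suff [c [c0 Hc]] : exists c, 0 < c /\ forall i, i \in enum I -> P i -> c <= f i.
  by exists c; split => // i; apply: Hc; rewrite mem_enum.
elim: (enum I) => [|a s IH]; first by exists 1.
case: IH => c [c0 Hc].
case Pa: (P a).
  exists (Num.min c (f a)); split; first by rewrite lt_min c0 H.
  move=> i; rewrite inE => /orP [/eqP -> _|iS Pi]; first by rewrite ge_min lexx orbT.
  by rewrite ge_min Hc.
exists c; split => // i; rewrite inE => /orP [/eqP -> |]; first by rewrite Pa.
exact: Hc.
Qed.

End Gen.

Section Block.
Variables (A Q : finType) (R : realType) (aut : pa A Q R) (D : {set Q}).
Notation Mw := (Mw aut).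
Notation Del := (pa_Delta aut).
Notation vm := (vm aut).

Definition phi (v : seq A) i s := \sum_(d in D) Mw (drop i v) s d.

Lemma phi_ge0 v i s : 0 <= phi v i s.
Proof. by apply: sumr_ge0 => d _; apply: Mw_ge0. Qed.

Lemma phi_le1 v i s : phi v i s <= 1.
Proof.
rewrite -(Mw_sum1 aut (drop i v) s) (bigID (mem D)) /= lerDl.
by apply: sumr_ge0 => d _; apply: Mw_ge0.
Qed.

Lemma phi_step (a0 : A) v i s : (i < size v)%N ->
  phi v i s = \sum_s' Del s (nth a0 v i) s' * phi v i.+1 s'.
Proof.
move=> Hi; rewrite /phi (drop_nth a0 Hi).
under eq_bigr do rewrite Mw_cons.
rewrite exchange_big /=; apply: eq_bigr => s' _; by rewrite mulr_sumr.
Qed.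

Lemma phi_end v s : phi v (size v) s = (s \in D)%:R.
Proof.
rewrite /phi drop_size; under eq_bigr do rewrite Mw_nil.
case: (boolP (s \in D)) => sD.
  rewrite (bigD1 s) //= eqxx big1 ?addr0 // => d /andP [_].
  by rewrite eq_sym => /negbTE ->.
by rewrite big1 // => d dD; case: eqP => // E; rewrite E dD in sD.
Qed.

Lemma vm_step (a0 : A) x v i t : (i < size v)%N ->
  vm x (take i.+1 v) t = \sum_s vm x (take i v) s * Del s (nth a0 v i) t.
Proof.
move=> Hi; rewrite (take_nth a0 Hi) -cats1 vm_cat {1}/vm.
by apply: eq_bigr => s _; rewrite Mw_one.
Qed.

Lemma cons_phi x v i :
  \sum_s vm x (take i v) s * phi v i s = \sum_t x t * phi v 0 t.
Proof.
rewrite /vm; under eq_bigr do rewrite mulr_suml.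
rewrite exchange_big /=; apply: eq_bigr => t _.
under eq_bigr do rewrite -mulrA.
rewrite -mulr_sumr; congr (_ * _).
rewrite /phi drop0.
under eq_bigr do rewrite mulr_sumr.
rewrite exchange_big /=; apply: eq_bigr => d _.
have -> : Mw v t d = Mw (take i v ++ drop i v) t d by rewrite cat_take_drop.
by rewrite Mw_cat.
Qed.

Lemma block (a0 : A) (m theta : R) (lo hi mid : Q -> R) (v : seq A) :
  0 < m -> m <= 1 ->
  (forall s a t, 0 < Del s a t -> m <= Del s a t) ->
  (0 < #|Q|)%N ->
  (forall t, 0 <= lo t) -> (forall t, 0 <= hi t) -> (forall t, 0 <= mid t) ->
  0 < theta ->
  theta < \sum_t lo t * (0 < phi v 0 t)%R%:R ->
  \sum_t lo t * phi v 0 t <= m * theta / (2 * #|Q|%:R) ->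
  exists i s, (i <= size v)%N /\
    m * theta / #|Q|%:R < vm (fun t => lo t + hi t + mid t) (take i v) s /\
    vm (fun t => lo t + hi t + mid t) (take i v) s <=
      theta + 2 * \sum_t hi t * (1 - phi v 0 t) + \sum_t mid t.
Proof.
move=> m0 m1 mmin Q0 lo0 hi0 mid0 th0 Hstart Hend.
pose L i := \sum_s vm lo (take i v) s * (0 < phi v i s)%R%:R.
have Nq : 0 < #|Q|%:R :> R by rewrite ltr0n.
have N1 : 1 <= #|Q|%:R :> R by rewrite ler1n.
set c := m * theta / #|Q|%:R.
have c0 : 0 < c by rewrite /c divr_gt0 ?mulr_gt0.
have Hend' : \sum_t lo t * phi v 0 t <= c / 2.
  have E : m * theta / (2 * #|Q|%:R) = c / 2.
    by rewrite /c; field; rewrite gt_eqF.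
  by rewrite -E.
have cth : c <= theta.
  rewrite /c ler_pdivrMr //; nra.
have Lstep : forall i, (i < size v)%N -> m * L i <= L i.+1.
  move=> i Hi; rewrite /L.
  under [in X in _ <= X]eq_bigr do rewrite (vm_step a0 _ _ Hi) mulr_suml.
  rewrite exchange_big /= mulr_sumr; apply: ler_sum => s _.
  under [in X in _ <= X]eq_bigr do rewrite -mulrA.
  rewrite -mulr_sumr mulrCA; apply: ler_wpM2l; first exact: vm_ge0.
  case E: (0 < phi v i s); last first.
    rewrite mulr0; apply: sumr_ge0 => s' _; apply: mulr_ge0.
      exact: pa_Delta_ge0.
    exact: ler0n.
  rewrite mulr1; move: E; rewrite (phi_step a0 _ Hi) => /sum_pos_ex [s' Hs'].
  have Hd0 := pa_Delta_ge0 aut s (nth a0 v i) s'.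
  have Hp0 := phi_ge0 v i.+1 s'.
  have Hd : 0 < Del s (nth a0 v i) s'.
    rewrite lt0r Hd0 andbT; apply/negP => /eqP E; by rewrite E mul0r ltxx in Hs'.
  have Hp : 0 < phi v i.+1 s'.
    rewrite lt0r Hp0 andbT; apply/negP => /eqP E; by rewrite E mulr0 ltxx in Hs'.
  apply: le_trans (term_le_sumT (F := fun s'' =>
     Del s (nth a0 v i) s'' * (0 < phi v i.+1 s'')%R%:R) s' _).
    by rewrite /= Hp mulr1; apply: mmin.
  move=> s''; apply: mulr_ge0 => //; first exact: pa_Delta_ge0.
have Lend : L (size v) = \sum_t lo t * phi v 0 t.
  rewrite -(cons_phi lo v (size v)) /L; apply: eq_bigr => s _.
  by rewrite phi_end; case: (s \in D); rewrite ?ltr01 ?ltxx.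
have Hex : exists i, (i <= size v)%N && (L i <= theta).
  exists (size v); rewrite leqnn /= Lend.
  apply: le_trans Hend' _; apply: le_trans cth; nra.
case: (ex_minnP Hex) => i /andP [Hi HLi] Hmin.
have L0 : L 0%N = \sum_t lo t * (0 < phi v 0 t)%R%:R.
  by rewrite /L; apply: eq_bigr => s _; rewrite take0 vm_nil.
case: i Hi HLi Hmin => [|k] Hi HLi Hmin.
  by move: HLi; rewrite L0 leNgt Hstart.
have HLk : theta < L k.
  rewrite ltNge; apply/negP => Hk.
  by have := Hmin k; rewrite (ltnW Hi) Hk /= => /(_ isT); rewrite ltnn.
have HLi' : m * theta < L k.+1.
  apply: lt_le_trans (Lstep k Hi); by rewrite ltr_pM2l.
have [s Hs] := sum_avg (fun s => vm lo (take k.+1 v) s * (0 < phi v k.+1 s)%R%:R) Q0.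
set lk := vm lo (take k.+1 v) s.
have Hterm : c < lk * (0 < phi v k.+1 s)%R%:R.
  rewrite /c ltr_pdivrMr //; apply: (lt_le_trans HLi'); rewrite [X in _ <= X]mulrC; exact: Hs.
have Hph : 0 < phi v k.+1 s.
  by move: Hterm; case: (0 < _)%R => //; rewrite mulr0 => /(lt_trans c0); rewrite ltxx.
rewrite Hph mulr1 in Hterm.
have lkle : lk <= theta.
  apply: le_trans HLi; rewrite /L.
  apply: le_trans (term_le_sumT (F := fun s =>
    vm lo (take k.+1 v) s * (0 < phi v k.+1 s)%R%:R) s _).
    by rewrite /= Hph mulr1.
  move=> s'; apply: mulr_ge0; first exact: vm_ge0.
  exact: ler0n.
have Hlophi : lk * phi v k.+1 s <= c / 2.
  apply: le_trans Hend'; rewrite -(cons_phi lo v k.+1).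
  apply: (term_le_sumT (F := fun s => vm lo (take k.+1 v) s * phi v k.+1 s)) => s'.
  by apply: mulr_ge0; [exact: vm_ge0 | exact: phi_ge0].
have Hphi : phi v k.+1 s < 1 / 2 by nra.
set hk := vm hi (take k.+1 v) s.
have hk0 : 0 <= hk by apply: vm_ge0.
have Hhi : hk * (1 - phi v k.+1 s) <= \sum_t hi t * (1 - phi v 0 t).
  have -> : \sum_t hi t * (1 - phi v 0 t) =
      \sum_s vm hi (take k.+1 v) s * (1 - phi v k.+1 s).
    under eq_bigr do rewrite mulrBr mulr1.
    under [in RHS]eq_bigr do rewrite mulrBr mulr1.
    by rewrite !sumrB cons_phi vm_sum.
  apply: (term_le_sumT (F := fun s => vm hi (take k.+1 v) s * (1 - phi v k.+1 s))) => s'.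
  by apply: mulr_ge0; [exact: vm_ge0 | rewrite subr_ge0; exact: phi_le1].
set mk := vm mid (take k.+1 v) s.
have Hmid : mk <= \sum_t mid t.
  rewrite -(vm_sum aut mid (take k.+1 v)).
  by apply: (term_le_sumT (F := fun s => vm mid (take k.+1 v) s)) => s'; apply: vm_ge0.
have mk0 : 0 <= mk by apply: vm_ge0.
exists k.+1, s; split => //.
rewrite vm_add (vm_add aut lo hi) -/lk -/hk -/mk.
split; first nra.
have : hk <= 2 * \sum_t hi t * (1 - phi v 0 t) by nra.
nra.
Qed.

End Block.

Section Gen2.
Variable (R : realType).

Lemma sum_in_delta (I : finType) (S : {set I}) s :
  \sum_(t in S) (s == t)%:R = (s \in S)%:R :> R.
Proof.
case: (boolP (s \in S)) => sS.
  rewrite (bigD1 s) //= eqxx big1 ?addr0 // => d /andP [_].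
  by rewrite eq_sym => /negbTE ->.
by rewrite big1 // => d dS; case: eqP => // E; rewrite E dS in sS.
Qed.

Lemma sum_ind (I : finType) (S : {set I}) (F : I -> R) :
  \sum_t F t * (t \in S)%:R = \sum_(t in S) F t.
Proof.
rewrite [RHS]big_mkcond /=; apply: eq_bigr => t _.
by case: (t \in S); rewrite ?mulr1 ?mulr0.
Qed.

Lemma sum_small (I : finType) (P : pred I) (F : I -> R) e :
  0 <= e -> (forall t, P t -> F t <= e / #|I|%:R) -> \sum_(t | P t) F t <= e.
Proof.
move=> e0 H.
apply: le_trans (ler_sum _ H) _.
rewrite sumr_const.
case: (posnP #|I|) => HI.
  have -> : #|P| = 0%N by apply/eqP; rewrite -leqn0 -HI max_card.
  by rewrite mulr0n.
have N0 : 0 < #|I|%:R :> R by rewrite ltr0n.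
rewrite -[_ *+ #|P|]mulr_natr.
have E : e / #|I|%:R * #|I|%:R = e by rewrite divfK // gt_eqF.
rewrite -[X in _ <= X]E; apply: ler_wpM2l; first by rewrite divr_ge0 // ltW.
by rewrite ler_nat max_card.
Qed.

End Gen2.

Lemma ev_ex (P : nat -> Prop) :
  (\forall n \near \oo, P n) -> exists N, forall n, (N <= n)%N -> P n.
Proof. by case=> N _ HN; exists N => n Hn; apply: HN. Qed.

Unset Implicit Arguments.
Section Main.
Variables (A Q : finType) (R : realType) (aut : pa A Q R).
Variables (u : nat -> seq A) (M : Q -> Q -> R) (r q : Q).
Hypothesis HM : forall s t, (fun n => Mw aut (u n) s t) @ \oo --> M s t.
Hypothesis HMid : idempotent_mx M.
Hypothesis Hr : recurrent M r.
Hypothesis Hq : recurrent M q.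
Hypothesis Hlim : (fun n => Pr aut r (u n) q) @ \oo --> (0 : R).
Hypothesis Hpos : forall n, 0 < Pr aut r (u n) q.

Notation Mn n := (Mw aut (u n)).
Let N := #|Q|%:R : R.

Lemma Q0 : (0 < #|Q|)%N.
Proof. by apply/card_gt0P; exists r. Qed.

Lemma N0 : 0 < N.
Proof. by rewrite /N ltr0n Q0. Qed.

Lemma Mge0 s t : 0 <= M s t.
Proof.
rewrite leNgt; apply/negP => H.
have [n Hn] := filter_ex (cvgr_lt _ (HM s t) _ H).
by move: (Mw_ge0 aut (u n) s t); rewrite leNgt Hn.
Qed.

Lemma ev_small s t e : M s t = 0 -> 0 < e -> \forall n \near \oo, Mn n s t <= e.
Proof. by move=> H e0; apply: (cvgr_le _ (HM s t)); rewrite H. Qed.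

Lemma ev_big s t e : e < M s t -> \forall n \near \oo, e <= Mn n s t.
Proof. by move=> H; apply: (cvgr_ge _ (HM s t)). Qed.

Lemma Mtrans x y z : 0 < M x y -> 0 < M y z -> 0 < M x z.
Proof.
move=> H1 H2; rewrite HMid /qmx_mul.
apply: lt_le_trans (term_le_sumT (F := fun w => M x w * M w z) y _).
  exact: mulr_gt0.
by move=> w; apply: mulr_ge0; apply: Mge0.
Qed.

Lemma Mconn x y : connect (mx_edge M) x y -> x = y \/ 0 < M x y.
Proof.
case/connectP => p Hp ->; elim: p x Hp => [|z p IH] x /=; first by left.
case/andP => Hxz Hp; case: (IH z Hp) => [<-|H]; right => //.
exact: Mtrans Hxz H.
Qed.

Lemma Mrow s : exists t, 0 < M s t.
Proof.
apply/not_existsP => H.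
have H0 : forall t, M s t = 0.
  move=> t; apply/eqP; rewrite eq_le Mge0 andbT leNgt; apply/negP/H.
have e0 : 0 < 1 / (2 * N) by rewrite divr_gt0 // mulr_gt0 // N0.
have [n Hn] := filter_ex (filter_forall _ (fun t => ev_small s t _ (H0 t) e0)).
have : \sum_t Mn n s t <= \sum_(t : Q) 1 / (2 * N) by apply: ler_sum => t _; apply: Hn.
have E : \sum_(t : Q) 1 / (2 * N) = 1 / 2.
  rewrite sumr_const -mulr_natr -/N.
  by field; rewrite gt_eqF // N0.
rewrite Mw_sum1 E; lra.
Qed.

Lemma Mself x : (forall t, connect (mx_edge M) x t -> connect (mx_edge M) t x) ->
  0 < M x x.
Proof.
move=> Hx; have [t Ht] := Mrow x.
have : connect (mx_edge M) t x by apply: Hx; apply: connect1.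
case/Mconn => [E|H]; first by rewrite E in Ht.
exact: Mtrans Ht H.
Qed.

Lemma Mrr : 0 < M r r.
Proof. exact: Mself. Qed.

Lemma Mrq0 : M r q = 0.
Proof. exact: (cvg_unique _ (HM r q) Hlim). Qed.


Definition Dset : {set Q} := [set t | (t == q) || (0 < M q t)]%SET.
Definition Cset : {set Q} := [set t | 0 < M r t]%SET.
Definition Lo : {set Q} := [set t | [forall d in Dset, M t d == 0]]%SET.
Definition Hi : {set Q} := [set t | [forall t' in ~: Dset, M t t' == 0]]%SET.
Definition Mid : {set Q} := ~: (Lo :|: Hi).

Lemma Mzero s t : ~ 0 < M s t -> M s t = 0.
Proof. move=> H; apply/eqP; rewrite eq_le Mge0 andbT leNgt; exact/negP. Qed.

Lemma D_closed d t : d \in Dset -> 0 < M d t -> t \in Dset.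
Proof.
rewrite !inE => /orP [/eqP -> H|Hd H]; first by rewrite H orbT.
by rewrite (Mtrans _ _ _ Hd H) orbT.
Qed.

Lemma qD : q \in Dset.
Proof. by rewrite inE eqxx. Qed.

Lemma D_Hi d : d \in Dset -> d \in Hi.
Proof.
move=> Hd; rewrite inE; apply/forall_inP => t; rewrite finset.in_setC => Ht.
apply/eqP/Mzero => H; by rewrite (D_closed d t Hd H) in Ht.
Qed.

Lemma r_Lo : r \in Lo.
Proof.
rewrite inE; apply/forall_inP => d Hd; apply/eqP/Mzero => H.
move: Hd; rewrite inE => /orP [/eqP E|Hqd].
  by move: H; rewrite E Mrq0 ltxx.
have [E|Hdq] := Mconn _ _ (Hq d (connect1 Hqd)).
  by move: H; rewrite E Mrq0 ltxx.
by move: (Mtrans _ _ _ H Hdq); rewrite Mrq0 ltxx.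
Qed.

Lemma LoHi t : t \in Lo -> t \notin Hi.
Proof.
rewrite !inE => /forall_inP HL; apply/negP => /forall_inP HH.
have [t' Ht'] := Mrow t.
case: (boolP (t' \in Dset)) => Hd.
  by move: Ht'; rewrite (eqP (HL t' Hd)) ltxx.
have Hd' : t' \in ~: Dset by rewrite finset.in_setC.
by move: Ht'; rewrite (eqP (HH t' Hd')) ltxx.
Qed.

Lemma part_ind t : ((t \in Lo)%:R + (t \in Hi)%:R + (t \in Mid)%:R : R) = 1.
Proof.
rewrite /Mid finset.in_setC finset.in_setU.
case: (boolP (t \in Lo)) => HL.
  by rewrite (negbTE (LoHi t HL)) /= !addr0.
by case: (t \in Hi); rewrite /= ?add0r ?addr0.
Qed.

Lemma Lo_row t t' : t \in Lo -> t' \in Mid -> M t t' = 0.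
Proof.
move=> HL Hm; apply: Mzero => H.
move: Hm; rewrite /Mid finset.in_setC finset.in_setU negb_or => /andP [HnL _].
move: HnL; rewrite inE => /negP; apply; apply/forall_inP => d Hd.
apply/eqP/Mzero => H2.
move: HL; rewrite inE => /forall_inP /(_ d Hd) /eqP E.
by move: (Mtrans _ _ _ H H2); rewrite E ltxx.
Qed.

Lemma Hi_row t t' : t \in Hi -> t' \in Mid -> M t t' = 0.
Proof.
move=> HH Hm; move: HH; rewrite inE => /forall_inP H; apply/eqP/H.
rewrite finset.in_setC; apply/negP => Hd.
by move: Hm; rewrite /Mid finset.in_setC finset.in_setU (D_Hi _ Hd) orbT.
Qed.

Lemma nMid_row t t' : t \notin Mid -> t' \in Mid -> M t t' = 0.
Proof.
move=> H1 H2; move: H1; rewrite /Mid finset.in_setC negbK finset.in_setU => /orP [H|H].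
  exact: Lo_row.
exact: Hi_row.
Qed.

Lemma Mid_ex t : t \in Mid -> exists2 d, d \in Dset & 0 < M t d.
Proof.
rewrite /Mid finset.in_setC finset.in_setU negb_or => /andP [HnL _].
case: (pselect (exists2 d, d \in Dset & 0 < M t d)) => // H; exfalso.
move/negP: HnL; apply; rewrite inE; apply/forall_inP => d Hd.
apply/eqP/Mzero => H'; apply: H; by exists d.
Qed.

Lemma D_nMid d : d \in Dset -> d \notin Mid.
Proof. by move=> Hd; rewrite /Mid finset.in_setC finset.in_setU (D_Hi _ Hd) orbT. Qed.

Lemma rC : r \in Cset.
Proof. by rewrite inE Mrr. Qed.

Lemma C_r t : t \in Cset -> 0 < M t r.
Proof.
rewrite inE => H; have [E|H'] := Mconn _ _ (Hr t (connect1 H)); last by [].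
by rewrite E Mrr.
Qed.

Lemma C_closed t t' : t \in Cset -> t' \notin Cset -> M t t' = 0.
Proof.
rewrite !inE => H H'; apply: Mzero => H2; by rewrite (Mtrans _ _ _ H H2) in H'.
Qed.

Lemma rq : r != q.
Proof. by apply/eqP => E; move: Mrr; rewrite {2}E Mrq0 ltxx. Qed.


Lemma ev_cond (P : Prop) (Qn : nat -> Prop) :
  (P -> \forall n \near \oo, Qn n) -> \forall n \near \oo, (P -> Qn n).
Proof.
case: (pselect P) => HP H.
  by apply: filterS (H HP) => n Hn _.
by apply: nearW => n HP'.
Qed.

Lemma main_contra : simple_pa aut -> False.
Proof.
move=> Hsimple.
have [c1 [c10 Hc1]] := fin_min (P := fun t => t \in Cset) (f := fun t => M t r)
  (fun t Ht => C_r t Ht).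
have [g0 [g00 Hg0]] := fin_min
  (P := fun p : Q * Q => (p.1 \in Mid) && (p.2 \in Dset) && (0 < M p.1 p.2))
  (f := fun p => M p.1 p.2) (fun p H => (andP H).2).
have [m0 [m00 Hm0]] := fin_min
  (P := fun p : Q * A * Q => 0 < pa_Delta aut p.1.1 p.1.2 p.2)
  (f := fun p => pa_Delta aut p.1.1 p.1.2 p.2) (fun p H => H).
pose m := Num.min m0 1.
have m_pos : 0 < m by rewrite lt_min m00 ltr01.
have m_le1 : m <= 1 by rewrite ge_min lexx orbT.
have m_min : forall s a t, 0 < pa_Delta aut s a t -> m <= pa_Delta aut s a t.
  by move=> s a t H; rewrite ge_min (Hm0 (s, a, t) H).
pose g := Num.min (g0 / 2) 1.
have g_pos : 0 < g by rewrite lt_min divr_gt0 // ltr01.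
have g_le1 : g <= 1 by rewrite ge_min lexx orbT.
have g_le : g <= g0 / 2 by rewrite ge_min lexx.
pose cC := c1 / 2.
have cC_pos : 0 < cC by rewrite divr_gt0.
pose beta := Num.min (cC / 2) 1.
have beta_pos : 0 < beta by rewrite lt_min divr_gt0 // ltr01.
have beta_le1 : beta <= 1 by rewrite ge_min lexx orbT.
have beta_le : beta <= cC / 2 by rewrite ge_min lexx.
pose a := 1 - g / 2.
have a_ge0 : 0 <= a by rewrite /a; lra.
have a_lt1 : a < 1 by rewrite /a; lra.
pose eps j := g / 4 * a ^+ j.
have aj_ge0 : forall j, 0 <= a ^+ j by move=> j; apply: exprn_ge0.
have eps_ge0 : forall j, 0 <= eps j.
  by move=> j; rewrite /eps mulr_ge0 // divr_ge0 // ltW.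
have eps_le : forall j, eps j <= a ^+ j.
  move=> j; rewrite /eps; have := aj_ge0 j; nra.
pose Good j n := (forall t t', M t t' = 0 -> Mn n t t' <= eps j / N) /\
                 (forall t, t \in Cset -> cC <= Mn n t r) /\
                 (forall t d, t \in Mid -> d \in Dset -> 0 < M t d -> g <= Mn n t d).
have HG : forall j, exists n, Good j n.
  move=> j.
  have e0 : 0 < eps j / N.
    rewrite divr_gt0 ?N0 // /eps mulr_gt0 ?divr_gt0 // exprn_gt0 //.
    by rewrite /a; lra.
  have cc1 : cC < c1 by rewrite /cC; lra.
  have gg : g0 / 2 < g0 by lra.
  have E1 : \forall n \near \oo, forall p : Q * Q, M p.1 p.2 = 0 -> Mn n p.1 p.2 <= eps j / N.
    apply: filter_forall => p; apply: ev_cond => H; exact: ev_small.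
  have E2 : \forall n \near \oo, forall t : Q, t \in Cset -> cC <= Mn n t r.
    apply: filter_forall => t; apply: ev_cond => Ht; apply: ev_big.
    exact: lt_le_trans cc1 (Hc1 t Ht).
  have E3 : \forall n \near \oo, forall p : Q * Q,
      (p.1 \in Mid) && (p.2 \in Dset) && (0 < M p.1 p.2) -> g <= Mn n p.1 p.2.
    apply: filter_forall => p; apply: ev_cond => H; apply: ev_big.
    exact: le_lt_trans g_le (lt_le_trans gg (Hg0 p H)).
  have [n [H1 [H2 H3]]] := filter_ex (filterI E1 (filterI E2 E3)).
  exists n; split; [|split].
  - by move=> t t' H; apply: (H1 (t, t')).
  - by move=> t Ht; apply: H2.
  - by move=> t d Ht Hd H; apply: (H3 (t, d)); rewrite /= Ht Hd H.
case: (choice HG) => f Hf.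
have vne : forall j, (0 < size (u (f j)))%N.
  move=> j; have := Hpos (f j); rewrite /Pr.
  case: (u (f j)) => [|x s] //; rewrite Mw_nil (negbTE rq) ltxx //.
have [a0 _] : exists a0 : A, True.
  by move: (vne 0%N); case: (u (f 0%N)) => [|x s] // _; exists x.
pose F J := flatten [seq u (f l) | l <- iota 0 J].
have F_S : forall J, F J.+1 = F J ++ u (f J).
  by move=> J; rewrite /F -addn1 iotaD map_cat flatten_cat /= add0n cats0.
have F_size : forall J, (J <= size (F J))%N.
  elim=> [|J IH] //; rewrite F_S size_cat -addn1 leq_add //.
have F_pre : forall J K, exists s, F (J + K)%N = F J ++ s.
  move=> J; elim=> [|K [s IH]]; first by exists [::]; rewrite addn0 cats0.
  by exists (s ++ u (f (J + K)%N)); rewrite addnS F_S IH catA.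
pose w k := nth a0 (F k.+1) k.
have w_nth : forall J k, (k < size (F J))%N -> w k = nth a0 (F J) k.
  move=> J k Hk; rewrite /w.
  case: (leqP k.+1 J) => H.
    have [s E] := F_pre k.+1 (J - k.+1)%N; rewrite subnKC in E => //.
    by rewrite E nth_cat F_size.
  have [s E] := F_pre J (k.+1 - J)%N; rewrite subnKC in E; last exact: ltnW.
  by rewrite E nth_cat Hk.
have pre_w : forall J n, (n <= size (F J))%N -> Defs.prefix w n = take n (F J).
  move=> J n Hn; apply: (@eq_from_nth _ a0).
    by rewrite size_mkseq size_takel.
  move=> k; rewrite size_mkseq => Hk.
  rewrite nth_mkseq // nth_take // (w_nth J) //; exact: leq_trans Hk Hn.
have pre_blk : forall j i, (i <= size (u (f j)))%N ->
    Defs.prefix w (size (F j) + i) = F j ++ take i (u (f j)).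
  move=> j i Hi; rewrite (pre_w j.+1); last by rewrite F_S size_cat leq_add2l.
  by rewrite F_S take_cat ltnNge leq_addr /= addKn.
pose pi j t := Mw aut (F j) r t.
have pi_S : forall j t', pi j.+1 t' = \sum_t pi j t * Mn (f j) t t'.
  by move=> j t'; rewrite /pi F_S Mw_cat.
have pi_ge0 : forall j t, 0 <= pi j t by move=> j t; apply: Mw_ge0.
have pi_sum1 : forall j, \sum_t pi j t = 1 by move=> j; apply: Mw_sum1.
have pi_sumS : forall j (S : {set Q}), \sum_(t in S) pi j t <= 1.
  move=> j S; rewrite -(pi_sum1 j) [X in _ <= X](bigID (fun t => t \in S)) /= lerDl.
  by apply: sumr_ge0 => t _.
have Pr_blk : forall j i s, (i <= size (u (f j)))%N ->
    Pr aut r (Defs.prefix w (size (F j) + i)) s = vm aut (pi j) (take i (u (f j))) s.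
  by move=> j i s Hi; rewrite /Pr pre_blk // Mw_cat.
have rowC : forall j t, t \in Cset -> 1 - eps j <= \sum_(t' in Cset) Mn (f j) t t'.
  move=> j t Ht.
  have Hs : \sum_(t' | t' \notin Cset) Mn (f j) t t' <= eps j.
    apply: sum_small => // t' Ht'; apply: (Hf j).1; exact: C_closed.
  have := Mw_sum1 aut (u (f j)) t.
  rewrite (bigID (fun t' => t' \in Cset)) /= => E; lra.
have rowMid : forall j t, t \in Mid -> \sum_(t' in Mid) Mn (f j) t t' <= 1 - g.
  move=> j t Ht; have [d Hd Htd] := Mid_ex t Ht.
  have Hg := (Hf j).2.2 t d Ht Hd Htd.
  have Hs : Mn (f j) t d <= \sum_(t' | t' \notin Mid) Mn (f j) t t'.
    apply: (term_le_sum (P := fun t' => t' \notin Mid)) => [t' _|]; first exact: Mw_ge0.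
    exact: D_nMid.
  have := Mw_sum1 aut (u (f j)) t.
  rewrite (bigID (fun t' => t' \in Mid)) /= => E; lra.
have rownMid : forall j t, t \notin Mid -> \sum_(t' in Mid) Mn (f j) t t' <= eps j.
  move=> j t Ht; apply: sum_small => // t' Ht'; apply: (Hf j).1; exact: nMid_row.
have Inv : forall j, 1/2 + a ^+ j / 2 <= \sum_(t in Cset) pi j t /\
                     \sum_(t in Mid) pi j t <= a ^+ j.
  elim=> [|j [IC IM]].
    rewrite expr0 /pi /F /= /qmx_id !sum_in_delta rC.
    have -> : (r \in Mid) = false.
      by rewrite /Mid finset.in_setC finset.in_setU r_Lo.
    by rewrite /=; split; lra.
  have Ej : forall (S : {set Q}), \sum_(t' in S) pi j.+1 t' =
      \sum_t pi j t * \sum_(t' in S) Mn (f j) t t'.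
    move=> S; under eq_bigr do rewrite pi_S.
    rewrite exchange_big /=; apply: eq_bigr => t _; by rewrite mulr_sumr.
  have aS : a ^+ j.+1 = a * a ^+ j by rewrite exprS.
  have epsj : eps j = g / 4 * a ^+ j by [].
  split.
  - rewrite Ej.
    have H1 : \sum_(t in Cset) pi j t * (1 - eps j) <=
              \sum_t pi j t * \sum_(t' in Cset) Mn (f j) t t'.
      rewrite [X in _ <= X](bigID (fun t => t \in Cset)) /=.
      apply: le_trans (_ : _ <= \sum_(t in Cset) pi j t * \sum_(t' in Cset) Mn (f j) t t') _.
        by apply: ler_sum => t Ht; apply: ler_wpM2l => //; apply: rowC.
      rewrite lerDl; apply: sumr_ge0 => t _; apply: mulr_ge0 => //.
      by apply: sumr_ge0 => t' _; apply: Mw_ge0.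
    apply: le_trans H1; rewrite -mulr_suml.
    have := pi_sumS j Cset; have := eps_ge0 j; have := aj_ge0 j.
    rewrite aS epsj /a; nra.
  - rewrite Ej [X in X <= _](bigID (fun t => t \in Mid)) /=.
    have H1 : \sum_(t in Mid) pi j t * \sum_(t' in Mid) Mn (f j) t t' <=
              (\sum_(t in Mid) pi j t) * (1 - g).
      rewrite mulr_suml; apply: ler_sum => t Ht; apply: ler_wpM2l => //.
      exact: rowMid.
    have H2 : \sum_(t | t \notin Mid) pi j t * \sum_(t' in Mid) Mn (f j) t t' <= eps j.
      apply: le_trans (_ : _ <= \sum_(t | t \notin Mid) pi j t * eps j) _.
        by apply: ler_sum => t Ht; apply: ler_wpM2l => //; apply: rownMid.
      rewrite -mulr_suml; apply: ler_piMl => //.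
      rewrite -(pi_sum1 j) [X in _ <= X](bigID (fun t => t \in Mid)) /= lerDr.
      by apply: sumr_ge0 => t _.
    have Hx0 : 0 <= \sum_(t in Mid) pi j t by apply: sumr_ge0 => t _.
    have := aj_ge0 j.
    rewrite aS; rewrite epsj in H2; rewrite /a; nra.
have Prr : forall j, beta <= pi j r.
  case=> [|j].
    by rewrite /pi /F /= /qmx_id eqxx.
  rewrite pi_S.
  have [IC _] := Inv j.
  apply: le_trans (_ : _ <= \sum_(t in Cset) pi j t * cC) _.
    rewrite -mulr_suml; have := aj_ge0 j; nra.
  rewrite [X in _ <= X](bigID (fun t => t \in Cset)) /=.
  apply: le_trans (_ : _ <= \sum_(t in Cset) pi j t * Mn (f j) t r) _.
    by apply: ler_sum => t Ht; apply: ler_wpM2l => //; apply: (Hf j).2.1.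
  rewrite lerDl; apply: sumr_ge0 => t _; apply: mulr_ge0 => //; exact: Mw_ge0.
have [lam [lam0 [As [Bs [HAB [HA Hconv]]]]]] := Hsimple w r.
pose lam' := Num.min lam beta.
have lam'0 : 0 < lam' by rewrite lt_min lam0 beta_pos.
have lam'1 : lam' <= lam by rewrite ge_min lexx.
have lam'2 : lam' <= beta by rewrite ge_min lexx orbT.
pose theta := lam' / 4.
have theta0 : 0 < theta by rewrite divr_gt0.
pose kappa := m * theta / N.
have kappa0 : 0 < kappa by apply: divr_gt0; [apply: mulr_gt0 | apply: N0].
have [N1 HN1] := ev_ex (cvgr_lt _ Hconv _ kappa0).
have dich : forall n s, (N1 <= n)%N ->
    lam <= Pr aut r (Defs.prefix w n) s \/ Pr aut r (Defs.prefix w n) s < kappa.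
  move=> n s Hn; case: (boolP (s \in As n)) => Hs; first by left; apply: HA.
  right; have HsB : s \in Bs n.
    have := finset.in_setT s; rewrite -(HAB n).2 finset.in_setU (negbTE Hs) //.
  apply: le_lt_trans (HN1 n Hn); rewrite /PrSet.
  apply: (term_le_sum (P := fun t => t \in Bs n)) => // t _; exact: Mw_ge0.
pose delta := Num.min (lam' / 8) (m * theta / (2 * N)).
have delta0 : 0 < delta.
  rewrite lt_min divr_gt0 //=; apply: divr_gt0; first exact: mulr_gt0.
  by apply: mulr_gt0 => //; apply: N0.
have delta1 : delta <= lam' / 8 by rewrite ge_min lexx.
have delta2 : delta <= m * theta / (2 * N) by rewrite ge_min lexx orbT.
have na : `|a| < 1 by rewrite ger0_norm.
have [J HJ] := ev_ex (cvgr_lt _ (cvg_geometric 1 na) _ delta0).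
pose j := maxn J N1.
have Haj : a ^+ j < delta.
  by have := HJ j (leq_maxl _ _); rewrite /geometric /= mul1r.
have jN1 : (N1 <= j)%N by apply: leq_maxr.
pose lo t := pi j t * (t \in Lo)%:R.
pose hi t := pi j t * (t \in Hi)%:R.
pose mid t := pi j t * (t \in Mid)%:R.
have Epart : (fun t => lo t + hi t + mid t) = pi j.
  by apply: funext => t; rewrite /lo /hi /mid -!mulrDr part_ind mulr1.
have Hphi_r : 0 < phi aut Dset (u (f j)) 0 r.
  apply: lt_le_trans (Hpos (f j)) _; rewrite /phi drop0.
  apply: (term_le_sum (P := fun t => t \in Dset)) => [t _|]; [exact: Mw_ge0|exact: qD].
have Hstart : theta < \sum_t lo t * (0 < phi aut Dset (u (f j)) 0 t)%R%:R.
  apply: lt_le_trans (_ : theta < lo r) _.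
    rewrite /lo r_Lo mulr1; have := Prr j; rewrite /theta; lra.
  apply: le_trans (term_le_sumT (F := fun t => lo t * (0 < phi aut Dset (u (f j)) 0 t)%R%:R) r _).
    by rewrite /= Hphi_r mulr1.
  by move=> t; apply: mulr_ge0; [apply: mulr_ge0 | exact: ler0n].
have Hlo_phi : forall t, t \in Lo -> phi aut Dset (u (f j)) 0 t <= eps j.
  move=> t Ht; rewrite /phi drop0; apply: sum_small => // d Hd.
  apply: (Hf j).1; apply/eqP.
  by move: Ht; rewrite inE => /forall_inP; apply.
have Hhi_phi : forall t, t \in Hi -> 1 - phi aut Dset (u (f j)) 0 t <= eps j.
  move=> t Ht.
  have Hs : \sum_(t' | t' \notin Dset) Mn (f j) t t' <= eps j.
    apply: sum_small => // t' Ht'; apply: (Hf j).1; apply/eqP.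
    by move: Ht; rewrite inE => /forall_inP; apply; rewrite finset.in_setC.
  have := Mw_sum1 aut (u (f j)) t.
  rewrite (bigID (fun t' => t' \in Dset)) /phi drop0 /= => E; lra.
have Hend : \sum_t lo t * phi aut Dset (u (f j)) 0 t <= m * theta / (2 * #|Q|%:R).
  apply: le_trans (_ : _ <= \sum_t pi j t * eps j) _.
    apply: ler_sum => t _; rewrite /lo.
    case: (boolP (t \in Lo)) => Ht.
      by rewrite mulr1; apply: ler_wpM2l => //; apply: Hlo_phi.
    by rewrite mulr0 mul0r; apply: mulr_ge0.
  rewrite -mulr_suml pi_sum1 mul1r.
  have := eps_le j; rewrite -/N; lra.
have Hrho : \sum_t hi t * (1 - phi aut Dset (u (f j)) 0 t) <= eps j.
  apply: le_trans (_ : _ <= \sum_t pi j t * eps j) _.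
    apply: ler_sum => t _; rewrite /hi.
    case: (boolP (t \in Hi)) => Ht.
      by rewrite mulr1; apply: ler_wpM2l => //; apply: Hhi_phi.
    rewrite mulr0 mul0r; apply: mulr_ge0 => //.
  by rewrite -mulr_suml pi_sum1 mul1r.
have Hmu : \sum_t mid t <= a ^+ j.
  by rewrite /mid sum_ind; have [_ ->] := Inv j.
have [i [s [Hi [Hlow Hup]]]] := block (D := Dset) (lo := lo) (hi := hi) (mid := mid) (v := u (f j)) a0 m_pos m_le1 m_min Q0
  (fun t => mulr_ge0 (pi_ge0 j t) (ler0n _ _))
  (fun t => mulr_ge0 (pi_ge0 j t) (ler0n _ _))
  (fun t => mulr_ge0 (pi_ge0 j t) (ler0n _ _)) theta0 Hstart Hend.
rewrite Epart -(Pr_blk j i s Hi) in Hlow Hup.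
have Hn : (N1 <= size (F j) + i)%N.
  exact: leq_trans jN1 (leq_trans (F_size j) (leq_addr _ _)).
have := eps_le j; have := eps_ge0 j.
have thetaE : theta = lam' / 4 by [].
case: (dich _ s Hn) => H; rewrite -/kappa in Hlow; lra.
Qed.

End Main.

Theorem theorem5p9 (A Q : finType) (R : realType) (aut : pa A Q R) :
  simple_pa aut -> leaktight aut.
Proof.
move=> Hs u [_ [M [HM [HMid [r [q [Hr [Hq [Hlim Hpos]]]]]]]]].
exact: (main_contra A Q R aut u M r q HM HMid Hr Hq Hlim Hpos Hs).
Qed.
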